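(* Let $(M,d)$ be a complete metric space and $X\subseteq M$ compact. Assume that every $\mu\in P(X)$ admits a barycenter in $M$, that $conv(X)$ is compact, and that at least one variance maximizing $\mu\in P(X)$ has a unique barycenter. Let $R$ be the circumradius of $X$ and $y$ its circumcenter. Then $\max_{\mu\in P(X)}Var(\mu)=R^2$, and every variance maximizing $\mu$ gives full measure to $\partial B(y,R)=\{x\in M: d(x,y)=R\}$.
   Context: $P(\cdot)$ denotes Borel probability measures. $Var(\mu)=\inf_{y\in M}\int_X d^2(x,y)\,d\mu(x)$, a barycenter of $\mu$ is a point of $M$ attaining this infimum, and a variance maximizing measure is a maximizer of $Var$ over $P(X)$. $conv(X)$ is the set of all barycenters of measures in $P(X)$. The circumradius of $X$ is $R=\inf_{z\in M}\sup_{x\in X}d(x,z)$, and a circumcenter is a point $y\in M$ with $X\subseteq\bar B(y,R)$; under these hypotheses the circumcenter exists and is unique. *)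

(* Defs.v *)
From HB Require Import structures.
From mathcomp Require Import all_boot all_order all_algebra.
From mathcomp Require Import all_classical all_reals all_analysis.
Set Implicit Arguments. Unset Strict Implicit. Unset Printing Implicit Defensive.
Import Order.TTheory GRing.Theory Num.Theory.
Local Open Scope classical_set_scope.
Local Open Scope ring_scope.

(* A complete metric space: the join of the library's complete
   pseudometric structure (which includes a point and the completeness axiom
   "every proper Cauchy filter converges") with its metric structure. *)
#[short(type="completeMetricType")]
HB.structure Definition CompleteMetric (K : numDomainType) :=
  { M of CompletePseudoMetric K M & PseudoMetric_isMetric K M }.

Section defs.
Context {R : realType} (M : completeMetricType R).

Definition Borel := g_sigma_algebraType (@open M).

(* P(X): Borel probability measures on M giving full measure to X
   (identified with Borel probability measures on X, X compact hence closed) *)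
Definition PX (X : set M) (mu : probability Borel R) : Prop :=
  mu (~` X) = 0%E.

Definition cost (mu : probability Borel R) (y : M) : \bar R :=
  (\int[mu]_x ((mdist (x : M) y) ^+ 2)%:E)%E.

Definition Var (mu : probability Borel R) : \bar R :=
  ereal_inf [set cost mu y | y in [set: M]].

Definition barycenter (mu : probability Borel R) (y : M) : Prop :=
  cost mu y = Var mu.

Definition var_maximizing (X : set M) (mu : probability Borel R) : Prop :=
  PX X mu /\ forall nu, PX X nu -> (Var nu <= Var mu)%E.

(* conv(X): all barycenters of measures in P(X) *)
Definition bconv (X : set M) : set M :=
  [set y | exists mu, PX X mu /\ barycenter mu y].

Definition circumradius (X : set M) : R :=
  inf [set sup [set mdist x z | x in X] | z in [set: M]].

Definition circumcenter (X : set M) (y : M) : Prop :=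
  X `<=` [set x | mdist x y <= circumradius X].

End defs.

(* Main.v *)
Require Import Defs.
From HB Require Import structures.
From mathcomp Require Import all_boot all_order all_algebra.
From mathcomp Require Import all_classical all_reals all_analysis.
Import Order.TTheory GRing.Theory Num.Theory.
Local Open Scope classical_set_scope.
Local Open Scope ring_scope.
From mathcomp Require Import lra ring measurable_realfun.
Import numFieldNormedType.Exports.
Section Aux0.
Context {R : realType} {M : completeMetricType R}.

Lemma mdist_lip (a b y : M) : `|mdist a y - mdist b y| <= mdist a b.
Proof.
have h1 := metric_triangle a b y; have h2 := metric_triangle b a y.
rewrite (metric_sym b a) in h2.
rewrite ler_norml; apply/andP; split; lra.
Qed.

Lemma mdist_cont (y : M) : continuous (fun x : M => mdist x y).
Proof.
move=> a; apply/cvgrPdist_lt => e e0.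
apply: filterS (nbhsx_ballx a e e0) => x; rewrite ballEmdist /= => h.
by rewrite (le_lt_trans (mdist_lip _ _ _)).
Qed.

Lemma cont_meas (f : M -> R) : continuous f -> measurable_fun [set: Borel M] f.
Proof.
move=> cf; apply: (measurability _ (RGenOpens.measurableE R)).
move=> _ [_ [a [b ->] <-]]; rewrite setTI; apply: sub_sigma_algebra.
by apply: (proj1 (continuousP _) cf); exact: interval_open.
Qed.

Lemma sq_meas (y : M) :
  measurable_fun [set: Borel M] (fun x : M => ((mdist x y) ^+ 2)%:E).
Proof.
apply/measurable_EFinP; apply: measurable_funX; exact: cont_meas (mdist_cont y).
Qed.

Lemma compact_meas (X : set M) : compact X -> measurable (X : set (Borel M)).
Proof.
move=> /(compact_closed (@metric_hausdorff _ M)) /closed_openC oX.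
rewrite -[X]setCK; apply: measurableC; exact: sub_sigma_algebra.
Qed.
End Aux0.
Lemma onem_ge0' (R : realType) (t : R) : t <= 1 -> 0 <= 1 - t.
Proof. by rewrite subr_ge0. Qed.

Section Mix.
Context {R : realType} {M : completeMetricType R}.
Variables (mu : probability (Borel M) R) (a : M) (t : R) (t0 : 0 <= t) (t1 : t <= 1).
Definition mixm (A : set (Borel M)) : \bar R :=
  measure_add (mscale (NngNum (@onem_ge0' _ _ t1)) mu) (mscale (NngNum t0) (@dirac _ (Borel M) a R)) A.
Let mix0 : mixm set0 = 0%E. Proof. exact: measure0. Qed.
Let mix_ge0 A : (0 <= mixm A)%E. Proof. exact: measure_ge0. Qed.
Let mix_sa : semi_sigma_additive mixm. Proof. exact: measure_semi_sigma_additive. Qed.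
HB.instance Definition _ := isMeasure.Build _ _ _ mixm mix0 mix_ge0 mix_sa.
Let mix_setT : mixm setT = 1%E.
Proof.
rewrite /mixm measure_addE /mscale /=.
rewrite /mscale /= (@probability_setT _ _ _ mu) diracT.
by rewrite !mule1 -EFinD subrK.
Qed.
HB.instance Definition _ := Measure_isProbability.Build _ _ _ mixm mix_setT.
End Mix.
Arguments mixm {R M} mu a {t} t0 t1 A.
Section Aux.
Context {R : realType} {M : completeMetricType R}.
Local Open Scope ereal_scope.

Lemma cost_ge0 (mu : probability (Borel M) R) z : 0 <= cost mu z.
Proof. by apply: integral_ge0 => x _; rewrite lee_fin sqr_ge0. Qed.

Lemma Var_le_cost (mu : probability (Borel M) R) z : Var mu <= cost mu z.
Proof. by apply: ereal_inf_lbound; exists z. Qed.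

Lemma Var_ge0 (mu : probability (Borel M) R) : 0 <= Var mu.
Proof. by apply: le_ereal_inf_tmp => _ [z _ <-]; exact: cost_ge0. Qed.

Lemma cost_le (X : set M) (mu : probability (Borel M) R) z (C : R) :
  compact X -> PX X mu -> (0 <= C)%R ->
  (forall x, X x -> (mdist x z ^+ 2 <= C)%R) -> cost mu z <= C%:E.
Proof.
move=> cX PXmu C0 hC; rewrite /cost.
have -> : C%:E = \int[mu]_(x in [set: Borel M]) (cst C%:E) x.
  rewrite integral_cst //; have h := probability_setT mu.
  by rewrite /= in h *; rewrite h mule1.
apply: (@ae_ge0_le_integral _ _ _ mu setT).
- exact: measurableT.
- by move=> x _; rewrite lee_fin sqr_ge0.
- exact: sq_meas.
- by move=> x _; rewrite lee_fin.
- exact: measurable_cst.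
- exists (~` X); split => //.
    by apply: measurableC; exact: compact_meas.
  move=> x /= hx Xx; apply: hx => _ /=; rewrite lee_fin; exact: hC.
Qed.

Lemma cost_mix (mu : probability (Borel M) R) a t (t0 : (0 <= t)%R) (t1 : (t <= 1)%R) z :
  cost (mixm mu a t0 t1) z = ((1 - t)%:E * cost mu z + (t * mdist a z ^+ 2)%:E).
Proof.
rewrite /cost.
have -> : \int[mixm mu a t0 t1]_x (mdist x z ^+ 2)%:E =
   \int[measure_add (mscale (NngNum (@onem_ge0' _ _ t1)) mu) (mscale (NngNum t0) (@dirac _ (Borel M) a R))]_x (mdist x z ^+ 2)%:E.
  by [].
rewrite ge0_integral_measure_add //; last 2 first.
- by move=> x _; rewrite lee_fin sqr_ge0.
- exact: sq_meas.
rewrite ge0_integral_mscale //; last 2 first.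
- exact: sq_meas.
- by move=> x _; rewrite lee_fin sqr_ge0.
rewrite ge0_integral_mscale //; last 2 first.
- exact: sq_meas.
- by move=> x _; rewrite lee_fin sqr_ge0.
rewrite integral_dirac //; last exact: sq_meas.
by rewrite diracT mul1e /= metric_sym EFinM.
Qed.

Lemma PX_mix (X : set M) (mu : probability (Borel M) R) a t (t0 : (0 <= t)%R) (t1 : (t <= 1)%R) :
  compact X -> X a -> PX X mu -> PX X (mixm mu a t0 t1).
Proof.
move=> cX Xa PXmu; rewrite /PX /= /mixm measure_addE /mscale /=.
rewrite [X in (_ * X + _)%E](_ : _ = 0%E); last exact: PXmu.
rewrite [X in (_ + _ * X)%E](_ : _ = 0%E).
  by rewrite mule0 mule0 adde0.
by rewrite /= /dirac indicE memNset //= => /(_ Xa).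
Qed.

Lemma sq_shift (D E e : R) : (0 <= D)%R -> (0 <= E)%R -> (0 < e)%R -> (E <= D + e)%R ->
  (E ^+ 2 <= (1 + e) * D ^+ 2 + (e + e ^+ 2))%R.
Proof.
move=> D0 E0 e0 h.
have h1 : (E ^+ 2 <= (D + e) ^+ 2)%R by rewrite ler_sqr // ?nnegrE; lra.
have h2 : (2 * D <= D ^+ 2 + 1)%R by have := sqr_ge0 (D - 1); rewrite !expr2; nra.
rewrite !expr2 in h1 h2 *; nra.
Qed.

Lemma cost_shift (mu : probability (Borel M) R) (b b' : M) (e : R) :
  (0 < e)%R -> (mdist b b' < e)%R ->
  cost mu b' <= (1 + e)%:E * cost mu b + (e + e ^+ 2)%:E.
Proof.
move=> e0 hb.
have -> : (1 + e)%:E * cost mu b + (e + e ^+ 2)%:E =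
  \int[mu]_x (((1 + e) * mdist x b ^+ 2)%:E + (e + e ^+ 2)%:E).
  rewrite ge0_integralD //; last 3 first.
  - by move=> x _; rewrite lee_fin mulr_ge0 // ?sqr_ge0 // addr_ge0 // ltW.
  - apply/measurable_EFinP; apply: measurable_funM => //.
    by apply/measurable_EFinP; exact: sq_meas.
  - by move=> x _; rewrite lee_fin addr_ge0 // ?sqr_ge0 // ltW.
  rewrite integral_cst //; have h := probability_setT mu.
  rewrite /= in h *; rewrite h mule1; congr (_ + _).
  under eq_integral do rewrite EFinM.
  rewrite ge0_integralZl //.
  - exact: sq_meas.
  - by move=> x _; rewrite lee_fin sqr_ge0.
  - by rewrite lee_fin addr_ge0 // ltW.
apply: ge0_le_integral => //.
- by move=> x _; rewrite lee_fin sqr_ge0.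
- exact: sq_meas.
- apply/measurable_EFinP; apply: measurable_funD => //.
  apply: measurable_funM => //; apply/measurable_EFinP; exact: sq_meas.
move=> x _; rewrite -EFinD lee_fin; apply: sq_shift.
- exact: mdist_ge0.
- exact: mdist_ge0.
- exact: e0.
- by rewrite (le_trans (metric_triangle _ b _)) // lerD2l ltW.
Qed.

Lemma fin_of_le (x : \bar R) (C : R) : 0 <= x -> x <= C%:E -> x = (fine x)%:E.
Proof.
move=> x0 xC; rewrite fineK // ge0_fin_numE //; exact: le_lt_trans xC (ltry _).
Qed.

Lemma cost_fin (X : set M) (mu : probability (Borel M) R) y z :
  compact X -> PX X mu -> circumcenter X y -> cost mu z = (fine (cost mu z))%:E.
Proof.
move=> cX PXmu cy; apply: (@fin_of_le _ ((circumradius X + mdist y z) ^+ 2)).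
  exact: cost_ge0.
apply: (@cost_le X mu z _ cX PXmu); first exact: sqr_ge0.
move=> x Xx; have h1 : (mdist x y <= circumradius X)%R := cy x Xx.
have h2 := metric_triangle x y z.
rewrite ler_sqr ?nnegrE ?mdist_ge0 //; first lra.
by apply: le_trans (mdist_ge0 x z) _; lra.
Qed.

Lemma Var_fin (X : set M) (mu : probability (Borel M) R) y :
  compact X -> PX X mu -> circumcenter X y -> Var mu = (fine (Var mu))%:E.
Proof.
move=> cX PXmu cy; apply: (@fin_of_le _ (fine (cost mu y))); first exact: Var_ge0.
rewrite -(@cost_fin X mu y y) //; exact: Var_le_cost.
Qed.

End Aux.

Lemma approx_le {R : realType} (c v C : R) : 0 <= C ->
  (forall k : nat, c <= v + C / k.+1%:R) -> c <= v.
Proof.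
move=> C0 h; rewrite leNgt; apply/negP => cv.
have : 0 < (c - v) / (C + 1) by rewrite divr_gt0 // ?subr_gt0 //; lra.
move=> /ltr_add_invr [k]; rewrite add0r => hk.
have := h k; set u := k.+1%:R^-1.
have u0 : 0 < u by rewrite /u invr_gt0.
move: hk; rewrite ltr_pdivlMr; last lra.
rewrite -/u => hk; rewrite mulrC -/u; nra.
Qed.

Lemma key_step {R : realType} (c e v t : R) : 0 < t -> t < 1 -> 0 <= v -> 0 <= e ->
  (1 - t) * c + t * e <= v -> v <= c -> e <= v /\ (1 - t) * c <= v.
Proof.
move=> t0 t1 v0 e0 h1 h2.
have h5 : 0 <= t * e by rewrite mulr_ge0 // ltW.
have h3 : (1 - t) * v <= (1 - t) * c by rewrite ler_wpM2l // subr_ge0 ltW.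
have h4 : t * e <= t * v by lra.
split; first by rewrite -(ler_pM2l t0).
lra.
Qed.

Lemma step2 {R : realType} (c v : R) (n : nat) : 0 <= v ->
  (1 - n.+2%:R^-1) * c <= v -> c <= v + v / n.+1%:R.
Proof.
move=> v0 h.
set q : R := n.+1%:R.
have q0 : 0 < q by rewrite /q ltr0n.
have hq : n.+2%:R = q + 1 by rewrite /q -natr1.
rewrite hq in h.
have e : 1 - (q + 1)^-1 = q / (q + 1) by field; lra.
rewrite e in h.
have -> : c = (q / (q + 1) * c) * ((q + 1) / q) by field; lra.
have -> : v + v / q = v * ((q + 1) / q) by field; lra.
rewrite ler_wpM2r // divr_ge0 //; lra.
Qed.

Lemma key {R : realType} {M : completeMetricType R} (X : set M)
  (mus : probability (Borel M) R) (b y : M) :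
  compact X ->
  (forall mu : probability (Borel M) R, PX X mu -> exists z, barycenter mu z) ->
  compact (bconv X) -> var_maximizing X mus ->
  (forall z, barycenter mus z -> b = z) -> circumcenter X y ->
  forall a, X a -> mdist a b ^+ 2 <= fine (Var mus).
Proof.
move=> cX hbar cconv [PXs maxs] buniq cy a Xa.
set v := fine (Var mus).
have Vv : Var mus = v%:E := Var_fin _ _ _ cX PXs cy.
have v0 : 0 <= v by rewrite -lee_fin -Vv Var_ge0.
pose t (n : nat) : R := n.+2%:R^-1.
have t0' n : 0 < t n by rewrite /t invr_gt0.
have t0 n : 0 <= t n by exact: ltW.
have t1' n : t n < 1 by rewrite /t invf_lt1 // ltr1n.
have t1 n : t n <= 1 by exact: ltW.
pose nu n := mixm mus a (t0 n) (t1 n).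
have PXnu n : PX X (nu n) := PX_mix _ _ _ _ (t0 n) (t1 n) cX Xa PXs.
have [bs hbs] := choice (fun n => hbar (nu n) (PXnu n)).
have hcn n : fine (cost mus (bs n)) <= v + v / n.+1%:R /\ mdist a (bs n) ^+ 2 <= v.
  have e1 : (Var (nu n) <= Var mus)%E := maxs _ (PXnu n).
  rewrite -(hbs n) /nu cost_mix Vv (cost_fin _ _ _ (bs n) cX PXs cy) in e1.
  have e2 : (Var mus <= cost mus (bs n))%E := Var_le_cost _ _.
  rewrite Vv (cost_fin _ _ _ (bs n) cX PXs cy) in e2.
  rewrite -EFinM -EFinD !lee_fin in e1 e2.
  have [k1 k2] := @key_step _ _ _ _ _ (t0' n) (t1' n) v0 (sqr_ge0 _) e1 e2.
  split => //; exact: step2.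
have hbconv n : bconv X (bs n) by exists (nu n); split => //; exact: hbs n.
pose F := bs @ \oo.
have FX : F (bconv X) by exists 0%N => // n _; exact: hbconv n.
have [b' [Cb' clb']] := cconv F _ FX.
have close_k k : exists n, (k <= n)%N /\ mdist (bs n) b' < k.+1%:R^-1.
  have := clb' [set z | exists2 n, (k <= n)%N & z = bs n] (ball b' k.+1%:R^-1).
  case.
  - by exists k => // n /= kn; exists n.
  - by apply: nbhsx_ballx; rewrite invr_gt0.
  move=> z [[n kn ->] hb]; exists n; split => //.
  by rewrite ballEmdist /= in hb; rewrite metric_sym.
have C0 : 0 <= 3 * v + 2 by lra.
have cb k : fine (cost mus b') <= v + (3 * v + 2) / k.+1%:R /\
            mdist a b' ^+ 2 <= v + (3 * v + 2) / k.+1%:R.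
  have [n [kn hn]] := close_k k.
  set d := k.+1%:R^-1 in hn *.
  have d0 : 0 < d by rewrite /d invr_gt0.
  have d1 : d <= 1 by rewrite /d invf_le1 // ler1n.
  have dn : n.+1%:R^-1 <= d by rewrite /d lef_pV2 ?posrE // ler_nat.
  clearbody d.
  have [hc he] := hcn n.
  have hvn : v / n.+1%:R <= v * d by rewrite ler_wpM2l.
  split.
    have := cost_shift mus _ _ _ d0 hn.
    rewrite (cost_fin _ _ _ b' cX PXs cy) (cost_fin _ _ _ (bs n) cX PXs cy).
    rewrite -EFinM -EFinD lee_fin => h.
    set cn := fine (cost mus (bs n)) in hc h; clearbody cn.
    have : (1 + d) * cn <= (1 + d) * (v + v * d).
      rewrite ler_wpM2l //; last by apply: (le_trans hc); rewrite lerD2l.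
      lra.
    have hint : 0 <= (1 - d) * (d * (v + 1)) by rewrite !mulr_ge0 //; lra.
    rewrite /=; nra.
  have hE : mdist a b' <= mdist a (bs n) + d.
    by rewrite (le_trans (metric_triangle _ (bs n) _)) // lerD2l ltW.
  have := sq_shift _ _ _ (mdist_ge0 a (bs n)) (mdist_ge0 a b') d0 hE.
  have : (1 + d) * mdist a (bs n) ^+ 2 <= (1 + d) * v by rewrite ler_wpM2l //; lra.
  have hint : 0 <= (1 - d) * (d * (v + 1)) by rewrite !mulr_ge0 //; lra.
  nra.
have cb1 : fine (cost mus b') <= v by apply: (approx_le _ _ _ C0) => k; case: (cb k).
have cb2 : mdist a b' ^+ 2 <= v by apply: (approx_le _ _ _ C0) => k; case: (cb k).
have bb' : barycenter mus b'.
  apply/le_anti; rewrite Var_le_cost andbT.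
  by rewrite (cost_fin _ _ _ b' cX PXs cy) Vv lee_fin.
by rewrite (buniq _ bb').
Qed.

Lemma sphere_full {R : realType} {M : completeMetricType R} (X : set M)
  (mu : probability (Borel M) R) (y : M) :
  compact X -> PX X mu -> circumcenter X y ->
  Var mu = ((circumradius X) ^+ 2)%:E ->
  mu [set x : M | mdist x y = circumradius X] = 1%E.
Proof.
move=> cX PXmu cy VR.
set Rc := circumradius X in cy VR *.
have cy' : cost mu y = (Rc ^+ 2)%:E.
  apply/le_anti; rewrite -VR Var_le_cost andbT VR.
  apply: (@cost_le _ _ X mu y _ cX PXmu); first exact: sqr_ge0.
  move=> x Xx; have h : mdist x y <= Rc := cy x Xx.
  have Rc0 : 0 <= Rc := le_trans (mdist_ge0 x y) h.
  by rewrite ler_sqr ?nnegrE ?mdist_ge0.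
have mf : measurable_fun [set: Borel M] (fun x : M => mdist x y ^+ 2).
  apply: measurable_funX; exact: cont_meas (mdist_cont y).
pose N k := [set x : M | X x /\ mdist x y ^+ 2 <= Rc ^+ 2 - k.+1%:R^-1].
have mN k : measurable (N k : set (Borel M)).
  have -> : N k = X `&` ([set: Borel M] `&` (fun x : M => mdist x y ^+ 2) @^-1`
                     `]-oo, Rc ^+ 2 - k.+1%:R^-1]).
    apply/seteqP; split => z /=; rewrite in_itv /=; first by case.
    by case=> Xz [_ h]; split.
  apply: measurableI; first exact: compact_meas.
  by apply: mf => //; exact: measurable_itv.
have N0 k : mu (N k) = 0%E.
  set d : R := k.+1%:R^-1.
  have d0 : 0 < d by rewrite /d invr_gt0.
  have h : (cost mu y + d%:E * mu (N k) <= (Rc ^+ 2)%:E)%E.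
    have -> : (cost mu y + d%:E * mu (N k) =
        \int[mu]_x ((mdist x y ^+ 2)%:E + d%:E * (\1_(N k) x)%:E))%E.
      rewrite ge0_integralD //; last 4 first.
      - by move=> x _; rewrite lee_fin sqr_ge0.
      - exact: sq_meas.
      - by move=> x _; rewrite mule_ge0 // lee_fin ?ltW.
      - apply: measurable_funeM; apply/measurable_EFinP.
        exact: measurable_indic.
      congr (_ + _)%E; rewrite ge0_integralZl //; last 2 first.
      - apply/measurable_EFinP; exact: measurable_indic.
      - by rewrite lee_fin ltW.
      by rewrite integral_indic // setIT.
    have -> : (Rc ^+ 2)%:E = (\int[mu]_(x in [set: Borel M]) (cst (Rc ^+ 2)%:E) x)%E.
      rewrite integral_cst //; have h := probability_setT mu.
      by rewrite /= in h *; rewrite h mule1.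
    apply: (@ae_ge0_le_integral _ _ _ mu setT).
    - exact: measurableT.
    - by move=> x _; rewrite adde_ge0 // ?mule_ge0 // lee_fin ?sqr_ge0 // ltW.
    - apply: emeasurable_funD; first exact: sq_meas.
      apply: measurable_funeM; apply/measurable_EFinP; exact: measurable_indic.
    - by move=> x _; rewrite lee_fin sqr_ge0.
    - exact: measurable_cst.
    exists (~` X); split => //.
      by apply: measurableC; exact: compact_meas.
    move=> x /= hx Xx; apply: hx => _ /=; rewrite indicE.
    have hxy : mdist x y <= Rc := cy x Xx.
    have hxy2 : mdist x y ^+ 2 <= Rc ^+ 2.
      by rewrite ler_sqr ?nnegrE ?mdist_ge0 // (le_trans (mdist_ge0 x y)).
    case: (boolP (x \in N k)) => [/set_mem [_ hN]|_].
      by rewrite -EFinM -EFinD lee_fin /d /= mulr1 -lerBrDr.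
    by rewrite -EFinM mulr0 -EFinD lee_fin addr0.
  have hm : mu (N k) = (fine (mu (N k)))%:E.
    apply: (fin_of_le _ 1); first exact: measure_ge0.
    exact: (probability_le1 mu (mN k)).
  have m0 : 0 <= fine (mu (N k)) by rewrite -lee_fin -hm measure_ge0.
  rewrite hm cy' -EFinM -EFinD lee_fin in h.
  rewrite hm; congr EFin; apply/eqP; rewrite eq_le m0 andbT.
  nra.
set S := [set x : M | mdist x y = Rc].
have negl : mu.-negligible (~` S : set (Borel M)).
  apply: (@negligibleS _ _ _ mu (~` X `|` \bigcup_k N k)).
  - move=> x /= hx; case: (pselect (X x)) => Xx; [right|by left].
    have hxy : mdist x y <= Rc := cy x Xx.
    have lt : mdist x y < Rc by rewrite lt_neqAle hxy andbT; apply/eqP.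
    have x0 := mdist_ge0 x y.
    have lt2 : mdist x y ^+ 2 < Rc ^+ 2 by rewrite !expr2; nra.
    have [k hk] := ltr_add_invr lt2.
    by exists k => //; split => //; rewrite lerBrDr ltW.
  - apply: negligibleU.
    + apply/negligibleP; first by apply: measurableC; exact: compact_meas.
      exact: PXmu.
    + apply: negligible_bigcup => k; apply/negligibleP => //; exact: N0 k.
have mS : measurable (S : set (Borel M)).
  have := cont_meas _ (mdist_cont y) measurableT _ (measurable_set1 Rc).
  by rewrite setTI.
have h0 : mu (~` S) = 0%E.
  by apply/negligibleP => //; exact: measurableC.
have hS : mu S = (fine (mu S))%:E.
  apply: (fin_of_le _ 1); first exact: measure_ge0.
  exact: (probability_le1 mu mS).
have := probability_setC mu mS.
rewrite h0 hS => /esym; rewrite -EFinB => /(congr1 fine) /= e.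
by congr EFin; lra.
Qed.

Theorem corollary3p4 (R : realType) (M : completeMetricType R) (X : set M) :
  @compact M X ->
  (forall mu : probability (Borel M) R, PX X mu -> exists y, barycenter mu y) ->
  @compact M (bconv X) ->
  (exists mu : probability (Borel M) R,
      var_maximizing X mu /\ exists! y, barycenter mu y) ->
  forall y : M, circumcenter X y ->
    (forall mu : probability (Borel M) R, PX X mu ->
       (Var mu <= ((circumradius X) ^+ 2)%:E)%E) /\
    (forall mu : probability (Borel M) R, var_maximizing X mu ->
       Var mu = ((circumradius X) ^+ 2)%:E /\
       mu [set x : M | mdist x y = circumradius X] = 1%E).
Proof.
move=> cX hbar cconv [mus [[PXs maxs] [b [bb buniq]]]] y cy.
have part1 mu : PX X mu -> (Var mu <= ((circumradius X) ^+ 2)%:E)%E.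
  move=> PXmu; apply: le_trans (Var_le_cost mu y) _.
  apply: (cost_le _ _ _ _ cX PXmu); first exact: sqr_ge0.
  move=> x Xx; have h : mdist x y <= circumradius X := cy x Xx.
  have Rc0 : 0 <= circumradius X := le_trans (mdist_ge0 x y) h.
  by rewrite ler_sqr ?nnegrE ?mdist_ge0.
have [x0 Xx0] : exists x0, X x0.
  apply: contrapT => hne.
  have e : (~` X) = [set: M].
    by apply/seteqP; split => x // _ Xx; apply: hne; exists x.
  have := probability_setT mus; rewrite /= -e.
  move=> h1; have h2 : mus (~` X) = 0%E := PXs.
  rewrite h1 in h2; by move: h2 => /eqP; rewrite eqe oner_eq0.
set Rc := circumradius X in part1 cy *.
set v := fine (Var mus).
have Vv : Var mus = v%:E := Var_fin _ _ _ cX PXs cy.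
have v0 : 0 <= v by rewrite -lee_fin -Vv Var_ge0.
have hkey := key _ _ _ _ cX hbar cconv (conj PXs maxs) buniq cy.
have ubz z : has_ubound [set mdist x z | x in X].
  exists (Rc + mdist y z) => _ [x Xx <-].
  have h1 : mdist x y <= Rc := cy x Xx.
  have h2 := metric_triangle x y z; lra.
have Rcv : Rc ^+ 2 <= v.
  have hsup : sup [set mdist x b | x in X] <= Num.sqrt v.
    apply: ge_sup; first by exists (mdist x0 b), x0.
    move=> _ [x Xx <-]; have h := hkey x Xx.
    by rewrite -ler_sqrt // sqrtr_sqr ger0_norm ?mdist_ge0 in h.
  have hinf : Rc <= sup [set mdist x b | x in X].
    rewrite /Rc /circumradius; apply: ge_inf; last by exists b.
    exists 0 => _ [z _ <-]; apply: le_trans (mdist_ge0 x0 z) _.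
    by apply: (ub_le_sup (ubz z)); exists x0.
  have Rc0 : 0 <= Rc := le_trans (mdist_ge0 x0 y) (cy x0 Xx0).
  rewrite -(sqr_sqrtr v0) ler_sqr ?nnegrE ?sqrtr_ge0 //.
  exact: le_trans hinf hsup.
have Vmus : Var mus = (Rc ^+ 2)%:E.
  by apply/le_anti; rewrite part1 // Vv lee_fin.
split; first exact: part1.
move=> mu [PXmu maxmu].
have VRc : Var mu = (Rc ^+ 2)%:E.
  by apply/le_anti; rewrite part1 //= -Vmus maxmu.
split => //; exact: sphere_full.
Qed.
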